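(* Let $G$ be a simple graph and let $G'$ be a minor of $G$, and let $k$ be an integer with $1\le k<|V(G')|$. Then $F_k(G')$ is a minor of $F_k(G)$.
   Context: For a simple graph $G=(V,E)$ on $n$ vertices and an integer $1\le k<n$, the $k$-token graph $F_k(G)$ is the graph whose vertices are all $k$-element subsets of $V$, two such subsets $A,B$ being adjacent whenever their symmetric difference $A\triangle B$ is a pair $\{a,b\}$ with $a$ adjacent to $b$ in $G$. A graph $H$ is a minor of $G$ if a graph isomorphic to $H$ can be obtained from $G$ by contracting edges, deleting edges, and deleting vertices (contractions producing simple graphs). *)

(* Defs.v *)
From Stdlib Require Import Relation_Operators.
From mathcomp Require Import all_boot.
Set Implicit Arguments. Unset Strict Implicit. Unset Printing Implicit Defensive.

Record sgraph (T : finType) := SGraph { gV : {set T}; gE : rel T }.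

Definition simple_graph (T : finType) (G : sgraph T) : Prop :=
  [/\ symmetric (gE G), irreflexive (gE G) &
      forall x y, gE G x y -> (x \in gV G) && (y \in gV G)].

Definition delete_vertex (T : finType) (G : sgraph T) (v : T) : sgraph T :=
  SGraph (gV G :\ v) (fun x y => [&& gE G x y, x != v & y != v]).

Definition delete_edge (T : finType) (G : sgraph T) (u v : T) : sgraph T :=
  SGraph (gV G)
    (fun x y => gE G x y && ~~ (((x == u) && (y == v)) || ((x == v) && (y == u)))).

(* contract the edge uv: v is merged into u; the result is simple *)
Definition contract_edge (T : finType) (G : sgraph T) (u v : T) : sgraph T :=
  SGraph (gV G :\ v)
    (fun x y => [&& x != y, x \in gV G :\ v, y \in gV G :\ v &
       [|| gE G x y, (x == u) && gE G v y | (y == u) && gE G x v]]).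

Inductive minor_step (T : finType) (G : sgraph T) : sgraph T -> Prop :=
  | MS_delv v : v \in gV G -> minor_step G (delete_vertex G v)
  | MS_dele u v : gE G u v -> minor_step G (delete_edge G u v)
  | MS_contr u v : gE G u v -> minor_step G (contract_edge G u v).

Definition graph_iso (T1 T2 : finType) (H : sgraph T1) (G : sgraph T2) : Prop :=
  exists f : T1 -> T2,
    [/\ {in gV H &, injective f}, f @: gV H = gV G &
        {in gV H &, forall x y, gE H x y = gE G (f x) (f y)}].

Definition is_minor (T1 T2 : finType) (H : sgraph T1) (G : sgraph T2) : Prop :=
  exists G0 : sgraph T2, clos_refl_trans (sgraph T2) (@minor_step T2) G G0 /\ graph_iso H G0.

Definition token_graph (T : finType) (G : sgraph T) (k : nat) : sgraph {set T} :=
  SGraph [set A : {set T} | (A \subset gV G) && (#|A| == k)]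
    (fun A B => [&& A \subset gV G, #|A| == k, B \subset gV G, #|B| == k &
       [exists a, exists b, ((A :\: B) :|: (B :\: A) == [set a; b]) && gE G a b]]).

(* Main.v *)
Require Import Defs.
From mathcomp Require Import all_boot.
From Stdlib Require Import Relation_Operators.
Set Implicit Arguments. Unset Strict Implicit. Unset Printing Implicit Defensive.

Lemma simple_step (T : finType) (G G1 : sgraph T) :
  simple_graph G -> minor_step G G1 -> simple_graph G1.
Proof.
case=> sym irr inV; case=> [v _|u v _|u v _]; split => /=.
- by move=> x y; rewrite sym; case: (gE G y x); case: (x != v); case: (y != v).
- by move=> x /=; rewrite irr.
- move=> x y /and3P [e xv yv]; rewrite !inE xv yv /=; exact: inV.
- move=> x y; rewrite sym; congr andb; congr negb; rewrite orbC; congr orb; exact: andbC.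
- by move=> x; rewrite /= irr.
- by move=> x y /andP [e _]; exact: inV.
- move=> x y; rewrite eq_sym (sym y x) (sym v x) (sym y v); congr (_ && _).
  rewrite andbCA; congr (_ && (_ && _)); congr (_ || _); exact: orbC.
- by move=> x /=; rewrite eqxx.
- by move=> x y /and4P [_ hx hy _]; rewrite hx hy.
Qed.

Lemma simple_rt (T : finType) (G G1 : sgraph T) :
  simple_graph G -> clos_refl_trans _ (@minor_step T) G G1 -> simple_graph G1.
Proof.
move=> sG r; elim: r sG => [x y s|x|x y z _ IH1 _ IH2] sx //.
- exact: simple_step s.
- exact: IH2 (IH1 sx).
Qed.

Lemma token_sym (T : finType) (G : sgraph T) k :
  symmetric (gE G) -> symmetric (gE (token_graph G k)).
Proof.
move=> sym.
have E : forall A B : {set T},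
  [exists a, exists b, ((A :\: B) :|: (B :\: A) == [set a; b]) && gE G a b] ->
  [exists a, exists b, ((B :\: A) :|: (A :\: B) == [set a; b]) && gE G a b].
  move=> A B /existsP [a /existsP [b /andP [/eqP e h]]].
  apply/existsP; exists b; apply/existsP; exists a.
  by rewrite setUC e setUC eqxx /= sym.
move=> A B /=.
by apply/idP/idP => /and5P [h1 h2 h3 h4 h5]; apply/and5P; split => //; exact: E.
Qed.

Lemma token_simple (T : finType) (G : sgraph T) k :
  simple_graph G -> simple_graph (token_graph G k).
Proof.
case=> sym irr inV; split; first exact: token_sym.
- move=> A /=; rewrite setDv setU0; apply/negbTE/negP.
  move=> /and5P [_ _ _ _ /existsP [a /existsP [b /andP [/eqP e _]]]].
  have : a \in [set a; b] by rewrite !inE eqxx.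
  by rewrite -e inE.
- by move=> A B /and5P [h1 h2 h3 h4 _]; rewrite !inE h1 h2 h3 h4.
Qed.

Lemma iso_refl (T : finType) (G : sgraph T) : graph_iso G G.
Proof. exists id; split => //; exact: imset_id. Qed.

Lemma iso_trans (T1 T2 T3 : finType) (X : sgraph T1) (Y : sgraph T2) (Z : sgraph T3) :
  graph_iso X Y -> graph_iso Y Z -> graph_iso X Z.
Proof.
case=> f [fi fim fe]; case=> g [gi gim ge]; exists (g \o f); split.
- move=> x y hx hy /= e; apply: (fi _ _ hx hy); apply: (gi _ _ _ _ e); by rewrite -fim; apply: imset_f.
- by rewrite imset_comp fim gim.
- move=> x y hx hy /=; rewrite fe // ge // -fim; exact: imset_f.
Qed.

Lemma mem_imset_in (T1 T2 : finType) (f : T1 -> T2) (V A : {set T1}) x :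
  {in V &, injective f} -> A \subset V -> x \in V -> (f x \in f @: A) = (x \in A).
Proof.
move=> fi AV xV; apply/imsetP/idP => [[y yA e]|xA]; last by exists x.
by rewrite (fi _ _ xV (subsetP AV _ yA) e).
Qed.

Lemma imset_inj_set (T1 T2 : finType) (f : T1 -> T2) (V A B : {set T1}) :
  {in V &, injective f} -> A \subset V -> B \subset V -> f @: A = f @: B -> A = B.
Proof.
move=> fi AV BV e; apply/setP => x; case xV: (x \in V).
- by rewrite -(mem_imset_in fi AV xV) -(mem_imset_in fi BV xV) e.
- have h : forall C : {set T1}, C \subset V -> (x \in C) = false.
    move=> C CV; apply/negbTE/negP => xC; move: xV; by rewrite (subsetP CV _ xC).
  by rewrite !h.
Qed.

Lemma imsetD_in (T1 T2 : finType) (f : T1 -> T2) (V A B : {set T1}) :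
  {in V &, injective f} -> A \subset V -> B \subset V ->
  f @: (A :\: B) = f @: A :\: f @: B.
Proof.
move=> fi AV BV; apply/setP => y; apply/imsetP/idP.
- case=> x; rewrite inE => /andP [xnB xA] ->.
  have xV := subsetP AV _ xA.
  by rewrite inE (mem_imset_in fi BV xV) (mem_imset_in fi AV xV) xnB xA.
- rewrite inE => /andP [ynB /imsetP [x xA e]]; subst y; exists x => //.
  have xV := subsetP AV _ xA.
  by rewrite inE xA andbT -(mem_imset_in fi BV xV).
Qed.

Lemma token_iso (T1 T2 : finType) (H : sgraph T1) (G : sgraph T2) k :
  graph_iso H G -> graph_iso (token_graph H k) (token_graph G k).
Proof.
case=> f [fi fim fe].
have fiA : forall A : {set T1}, A \subset gV H -> {in A &, injective f}.
  by move=> A AV x y xA yA; exact: (fi x y (subsetP AV _ xA) (subsetP AV _ yA)).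
exists (fun A : {set T1} => f @: A); split.
- move=> A B; rewrite !inE => /andP [AV _] /andP [BV _]; exact: imset_inj_set fi AV BV.
- apply/setP => B; rewrite inE /=; apply/imsetP/andP.
  + case=> A; rewrite inE => /andP [AV /eqP cA] ->.
    split; first by rewrite -fim; exact: imsetS.
    by rewrite (card_in_imset (fiA _ AV)) cA.
  + case=> BV /eqP cB.
    have sV : gV H :&: f @^-1: B \subset gV H by exact: subsetIl.
    have eB : f @: (gV H :&: f @^-1: B) = B.
      apply/setP => y; apply/imsetP/idP.
      * by case=> x; rewrite !inE => /andP [_ h] ->.
      * move=> yB; have := subsetP BV _ yB; rewrite -fim => /imsetP [x xV ex].
        by exists x => //; rewrite !inE xV /= -ex.
    exists (gV H :&: f @^-1: B); last by rewrite eB.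
    by rewrite inE sV /= -(card_in_imset (fiA _ sV)) eB cB.
- move=> A B hA hB; move: hA hB; rewrite !inE => /andP [AV /eqP cA] /andP [BV /eqP cB] /=.
  have hA : (#|A| == k) by apply/eqP.
  have hB : (#|B| == k) by apply/eqP.
  have hfA : (#|f @: A| == k) by rewrite (card_in_imset (fiA _ AV)) cA.
  have hfB : (#|f @: B| == k) by rewrite (card_in_imset (fiA _ BV)) cB.
  rewrite AV BV hA hB hfA hfB -fim !imsetS //=.
  set S := (A :\: B) :|: (B :\: A).
  have SV : S \subset gV H.
    apply/subsetP => x; rewrite !inE => /orP [/andP [_ h]|/andP [_ h]];
      [exact: (subsetP AV) | exact: (subsetP BV)].
  have -> : (f @: A :\: f @: B) :|: (f @: B :\: f @: A) = f @: S.
    by rewrite /S imsetU !(imsetD_in fi).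
  apply/existsP/existsP.
  + case=> a /existsP [b /andP [/eqP e h]].
    have aS : a \in S by rewrite e !inE eqxx.
    have bS : b \in S by rewrite e !inE eqxx orbT.
    exists (f a); apply/existsP; exists (f b).
    rewrite e imsetU !imset_set1 eqxx /= -fe //; [exact: (subsetP SV) | exact: (subsetP SV)].
  + case=> a' /existsP [b' /andP [/eqP e h]].
    have : a' \in f @: S by rewrite e !inE eqxx.
    case/imsetP => a aS ea.
    have : b' \in f @: S by rewrite e !inE eqxx orbT.
    case/imsetP => b bS eb.
    have aV := subsetP SV _ aS; have bV := subsetP SV _ bS.
    exists a; apply/existsP; exists b; apply/andP; split; last by rewrite fe // -ea -eb.
    apply/eqP; apply: (imset_inj_set fi SV).
    * by apply/subsetP => x; rewrite !inE => /orP [/eqP -> | /eqP ->].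
    * by rewrite e imsetU !imset_set1 ea eb.
Qed.

Lemma imsetD1_in (T1 T2 : finType) (f : T1 -> T2) (V : {set T1}) v :
  {in V &, injective f} -> v \in V -> f @: (V :\ v) = f @: V :\ f v.
Proof.
move=> fi vV; apply/setP => y; rewrite !inE; apply/imsetP/andP.
- case=> x; rewrite !inE => /andP [xv xV] ->; split; last exact: imset_f.
  apply: contra xv => /eqP e; apply/eqP; exact: fi e.
- case=> ynv /imsetP [x xV ex]; subst y; exists x => //.
  rewrite !inE xV andbT; apply: contra ynv => /eqP ->; done.
Qed.

Lemma transport_step (T1 T2 : finType) (A A1 : sgraph T1) (B : sgraph T2) :
  simple_graph A -> graph_iso A B -> minor_step A A1 ->
  exists B1, minor_step B B1 /\ graph_iso A1 B1.
Proof.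
case=> sym irr inV; case=> f [fi fim fe].
have E : forall z w, z \in gV A -> w \in gV A -> (f z == f w) = (z == w).
  by move=> z w zV wV; apply/eqP/eqP => [h|->]; [exact: fi h | done].
have fiD : forall v, {in gV A :\ v &, injective f}.
  by move=> v x y; rewrite !inE => /andP [_ hx] /andP [_ hy]; exact: fi.
have fV : forall x, x \in gV A -> f x \in gV B.
  by move=> x xV; rewrite -fim imset_f.
case=> [v vV|u v e|u v e].
- exists (delete_vertex B (f v)); split; first by constructor; exact: fV.
  exists f; split => /=; first exact: fiD.
  + by rewrite (imsetD1_in fi vV) fim.
  + move=> x y; rewrite !inE => /andP [xv xV] /andP [yv yV].
    by rewrite fe // !E // xv yv.
- have /andP [uV vV] := inV _ _ e.
  exists (delete_edge B (f u) (f v)); split; first by constructor; rewrite -fe.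
  exists f; split => //= x y xV yV.
  by rewrite fe // !E.
- have /andP [uV vV] := inV _ _ e.
  exists (contract_edge B (f u) (f v)); split; first by constructor; rewrite -fe.
  exists f; split => /=; first exact: fiD.
  + by rewrite (imsetD1_in fi vV) fim.
  + move=> x y; rewrite !inE => /andP [xv xV] /andP [yv yV].
    rewrite -fim !(mem_imset_in fi (subxx _)) // !E // xv yv xV yV.
    by rewrite -!fe.
Qed.

Lemma transport_rt (T1 T2 : finType) (A A0 : sgraph T1) :
  clos_refl_trans _ (@minor_step T1) A A0 -> forall (B : sgraph T2),
  simple_graph A -> graph_iso A B ->
  exists B0, clos_refl_trans _ (@minor_step T2) B B0 /\ graph_iso A0 B0.
Proof.
elim=> {A A0} [A A1 st|A|A A1 A2 r1 IH1 r2 IH2] B sA iso.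
- case: (transport_step sA iso st) => B1 [s i]; exists B1; split => //; exact: rt_step.
- by exists B; split => //; exact: rt_refl.
- case: (IH1 B sA iso) => B1 [rb1 i1].
  case: (IH2 B1 (simple_rt sA r1) i1) => B2 [rb2 i2].
  by exists B2; split => //; exact: rt_trans rb1 rb2.
Qed.

Lemma minor_trans (T1 T2 T3 : finType) (X : sgraph T1) (Y : sgraph T2) (Z : sgraph T3) :
  simple_graph Y -> is_minor X Y -> is_minor Y Z -> is_minor X Z.
Proof.
move=> sY [Y0 [rY iX]] [Z0 [rZ iY]].
case: (transport_rt rY sY iY) => Z1 [rZ1 i1].
exists Z1; split; [exact: rt_trans rZ rZ1 | exact: iso_trans iX i1].
Qed.

Lemma rt1 (T : finType) (G G1 : sgraph T) :
  minor_step G G1 -> clos_refl_trans _ (@minor_step T) G G1.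
Proof. exact: rt_step. Qed.

Lemma del_vertices (T : finType) (H G : sgraph T) :
  gV H \subset gV G ->
  exists G1, clos_refl_trans _ (@minor_step T) G G1 /\ gV G1 = gV H /\
    (forall x y, x \in gV H -> y \in gV H -> gE G1 x y = gE G x y).
Proof.
move e: #|gV G :\: gV H| => n; elim: n G e => [|n IH] G e sub.
- exists G; split; first exact: rt_refl.
  split => //; apply/eqP; rewrite eqEsubset sub andbT -setD_eq0 -cards_eq0 e //.
- have : gV G :\: gV H != set0 by rewrite -cards_eq0 e.
  case/set0Pn => w; rewrite inE => /andP [wnH wG].
  have e' : #|gV (delete_vertex G w) :\: gV H| = n.
    have -> : gV (delete_vertex G w) :\: gV H = (gV G :\: gV H) :\ w.
      by apply/setP => x; rewrite /= !inE andbCA.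
    move: e; rewrite (cardsD1 w) !inE wnH wG /= add1n; case=> //.
  have sub' : gV H \subset gV (delete_vertex G w).
    apply/subsetP => x xH; rewrite /= !inE (subsetP sub _ xH) andbT.
    by apply: contraNneq wnH => <-.
  case: (IH _ e' sub') => G1 [r1 [V1 E1]].
  exists G1; split; first exact: rt_trans (rt1 (MS_delv wG)) r1.
  split => // x y xH yH; rewrite E1 //=.
  have xw : x != w by apply: contraNneq wnH => <-.
  have yw : y != w by apply: contraNneq wnH => <-.
  by rewrite xw yw !andbT.
Qed.

Definition bad (T : finType) (H G : sgraph T) :=
  [set p : T * T | [&& p.1 \in gV H, p.2 \in gV H, gE G p.1 p.2 & ~~ gE H p.1 p.2]].

Lemma del_edges (T : finType) (H G : sgraph T) :
  gV G = gV H -> (forall x y, x \in gV H -> y \in gV H -> gE H x y -> gE G x y) ->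
  symmetric (gE H) ->
  exists G1, clos_refl_trans _ (@minor_step T) G G1 /\ gV G1 = gV H /\
    (forall x y, x \in gV H -> y \in gV H -> gE G1 x y = gE H x y).
Proof.
move=> hV0 hE0 sym.
have [n hn] : exists n, #|bad H G| <= n by exists #|bad H G|.
elim: n G hn hV0 hE0 => [|n IH] G hn hV hE.
- exists G; split; first exact: rt_refl.
  split => // x y xH yH; apply/idP/idP => [h|]; last exact: hE.
  apply/negPn/negP => nh.
  have : (x, y) \in bad H G by rewrite inE /= xH yH h nh.
  move: hn; rewrite leqn0 cards_eq0 => /eqP ->; by rewrite inE.
- case: (set_0Vmem (bad H G)) => [E0|[[a b] pin]].
  + exists G; split; first exact: rt_refl.
    split => // x y xH yH; apply/idP/idP => [h|]; last exact: hE.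
    apply/negPn/negP => nh.
    have : (x, y) \in bad H G by rewrite inE /= xH yH h nh.
    by rewrite E0 inE.
  + move: (pin); rewrite inE /= => /and4P [aH bH eab neab].
    have hE' : forall x y, x \in gV H -> y \in gV H -> gE H x y ->
        gE (delete_edge G a b) x y.
      move=> x y xH yH h /=; rewrite hE //=.
      apply/negP => /orP [/andP [/eqP ex /eqP ey]|/andP [/eqP ex /eqP ey]];
        subst x y; move: neab; by rewrite ?h // sym h.
    have hn' : #|bad H (delete_edge G a b)| <= n.
      have sub : bad H (delete_edge G a b) \subset bad H G :\ (a, b).
        apply/subsetP => [[x y]]; rewrite !inE /= => /and4P [xH yH /andP [e ne] nh].
        rewrite xH yH e nh !andbT; apply: (contra _ ne) => /eqP [-> ->].
        by rewrite !eqxx.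
      have h := subset_leq_card sub.
      have c1 := cardsD1 (a, b) (bad H G); rewrite pin add1n in c1.
      rewrite c1 ltnS in hn; exact: leq_trans h hn.
    case: (IH _ hn' hV hE') => G1 [r1 [V1 E1]].
    exists G1; split => //; exact: rt_trans (rt1 (MS_dele eab)) r1.
Qed.

Lemma subgraph_minor (T : finType) (H G : sgraph T) :
  gV H \subset gV G ->
  (forall x y, x \in gV H -> y \in gV H -> gE H x y -> gE G x y) ->
  symmetric (gE H) -> is_minor H G.
Proof.
move=> sub hE sym.
case: (del_vertices sub) => G1 [r1 [V1 E1]].
have hE1 : forall x y, x \in gV H -> y \in gV H -> gE H x y -> gE G1 x y.
  by move=> x y xH yH h; rewrite E1 //; exact: hE.
case: (del_edges V1 hE1 sym) => G2 [r2 [V2 E2]].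
exists G2; split; first exact: rt_trans r1 r2.
exists id; split => //; first by rewrite V2; exact: imset_id.
by move=> x y xH yH; rewrite E2.
Qed.

Lemma minor_prepend (T1 T2 : finType) (H : sgraph T1) (G G1 : sgraph T2) :
  clos_refl_trans _ (@minor_step T2) G G1 -> is_minor H G1 -> is_minor H G.
Proof.
move=> r [G0 [r0 i]]; exists G0; split => //; exact: rt_trans r r0.
Qed.

Definition Rel (T : finType) (M : {set T}) (p : T -> T) (x' x : T) :=
  (x' == x) || ((x' \in M) && (p x' == x)).

Lemma contract_matching (T : finType) (G : sgraph T) (p : T -> T) (M : {set T}) :
  (forall m, m \in M -> [/\ m \in gV G, p m \in gV G, p m \notin M & gE G (p m) m]) ->
  exists G1, clos_refl_trans _ (@minor_step T) G G1 /\ gV G1 = gV G :\: M /\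
   (forall x y x' y', x \in gV G1 -> y \in gV G1 -> x != y ->
      Rel M p x' x -> Rel M p y' y -> gE G x' y' -> gE G1 x y).
Proof.
move e: #|M| => n; elim: n M e => [|n IH] M e hM.
- move/eqP: e; rewrite cards_eq0 => /eqP ->.
  exists G; split; first exact: rt_refl.
  split; first by rewrite setD0.
  by move=> x y x' y' _ _ _; rewrite /Rel !inE /= !orbF => /eqP -> /eqP ->.
- have : M != set0 by rewrite -cards_eq0 e.
  case/set0Pn => w wM.
  have cM0 : #|M :\ w| = n by move: e; rewrite (cardsD1 w) wM add1n => [[]].
  have hM0 : forall m, m \in M :\ w ->
      [/\ m \in gV G, p m \in gV G, p m \notin M :\ w & gE G (p m) m].
    move=> m; rewrite inE => /andP [_ mM]; case: (hM m mM) => a b c d.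
    by split => //; rewrite inE negb_and c orbT.
  case: (IH _ cM0 hM0) => G1 [r1 [V1 E1]].
  case: (hM w wM) => wG pwG pwnM ewp.
  have wnM0 : w \notin M :\ w by rewrite !inE eqxx.
  have pwnM0 : p w \notin M :\ w by rewrite !inE negb_and pwnM orbT.
  have pww : p w != w by apply/eqP => h; move: pwnM; rewrite h wM.
  have pwV1 : p w \in gV G1 by rewrite V1 inE pwnM0 pwG.
  have wV1 : w \in gV G1 by rewrite V1 inE wnM0 wG.
  have Rr : forall N z, Rel N p z z by move=> N z; rewrite /Rel eqxx.
  have eG1 : gE G1 (p w) w by apply: (E1 _ _ (p w) w).
  exists (contract_edge G1 (p w) w); split.
    exact: rt_trans r1 (rt1 (MS_contr eG1)).
  split.
  + rewrite /= V1; apply/setP => x; rewrite !inE.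
    by case: (x =P w) => [->|_] /=; rewrite ?wM.
  + have Rsplit : forall x' x, Rel M p x' x ->
        Rel (M :\ w) p x' x \/ (x' = w /\ x = p w).
      move=> x' x; rewrite /Rel !inE; case/orP => [->|/andP [x'M /eqP <-]]; first by left.
      case: (x' =P w) => [->|nx']; first by right.
      by left; rewrite x'M eqxx orbT.
    move=> x y x' y' hx hy xy Rx Ry exy.
    have hx' := hx; have hy' := hy; rewrite /= !inE in hx' hy'.
    case/andP: hx' => xw xV1; case/andP: hy' => yw yV1.
    rewrite /= hx hy xy /=.
    case: (Rsplit _ _ Rx) => [Rx0|[ex' exx]]; case: (Rsplit _ _ Ry) => [Ry0|[ey' eyy]].
    * by rewrite (E1 x y x' y').
    * by subst y' y; rewrite eqxx (E1 x w x' w) ?orbT //.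
    * by subst x' x; rewrite eqxx (E1 w y w y') ?orbT // eq_sym.
    * by move: xy; rewrite exx eyy eqxx.
Qed.

Lemma token_contract (T : finType) (G : sgraph T) k u v :
  simple_graph G -> gE G u v ->
  is_minor (token_graph (contract_edge G u v) k) (token_graph G k).
Proof.
move=> sG e; case: (sG) => sym irr inV.
have /andP [uV vV] := inV _ _ e.
have uv : u != v by apply/eqP => h; move: e; rewrite h irr.
pose M := [set A in gV (token_graph G k) | (v \in A) && (u \notin A)].
pose p := fun A : {set T} => u |: (A :\ v).
have hM : forall A, A \in M -> [/\ A \in gV (token_graph G k),
    p A \in gV (token_graph G k), p A \notin M & gE (token_graph G k) (p A) A].
  move=> A; rewrite /M !inE => /andP [/andP [AV cA] /andP [vA unA]].
  have hu : u \notin A :\ v by rewrite inE negb_and unA orbT.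
  have pV : p A \subset gV G.
    by rewrite /p subUset sub1set uV (subset_trans (subD1set A v) AV).
  have pc : #|p A| == k.
    have c1 := cardsD1 v A; rewrite vA in c1.
    by rewrite /p cardsU1 hu -(eqP cA) c1.
  split.
  - by rewrite AV cA.
  - by rewrite pV pc.
  - by rewrite !eqxx /= !andbF.
  - rewrite /= pV pc AV cA /=; apply/existsP; exists u; apply/existsP; exists v.
    rewrite e andbT; apply/eqP/setP => x; rewrite /p !inE.
    case: (eqVneq x u) => [->|xu]; first by rewrite (negbTE unA) ?eqxx.
    case: (eqVneq x v) => [->|xv]; first by rewrite vA ?eqxx ?(eq_sym v u) ?(negbTE uv).
    by rewrite /=; case: (x \in A).
case: (contract_matching hM) => G2 [r2 [V2 E2]].
apply: (minor_prepend r2).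
have sC : simple_graph (contract_edge G u v) := simple_step sG (MS_contr e).
have symC : symmetric (gE (contract_edge G u v)) by case: sC.
have symF := token_sym k sym.
have Rr : forall z, Rel M p z z by move=> z; rewrite /Rel eqxx.
have inH : forall B, B \in gV (token_graph (contract_edge G u v) k) ->
    [/\ B \subset gV G, v \notin B, #|B| == k & B \in gV G2].
  move=> B; rewrite /= inE => /andP [BV cB].
  have BG : B \subset gV G := subset_trans BV (subD1set _ _).
  have vB : v \notin B by apply/negP => h; have := subsetP BV _ h; rewrite !inE eqxx.
  by split => //; rewrite V2 /M !inE BG cB /= (negbTE vB).
have K : forall B1 B2 : {set T}, B1 \subset gV G -> v \notin B1 -> #|B1| == k ->
    B2 \subset gV G -> v \notin B2 -> #|B2| == k -> forall c, c != u ->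
    gE G v c -> (B1 :\: B2) :|: (B2 :\: B1) = [set u; c] -> u \in B1 ->
    Rel M p (v |: (B1 :\ u)) B1 /\ gE (token_graph G k) (v |: (B1 :\ u)) B2.
  move=> B1 B2 B1G vB1 cB1 B2G vB2 cB2 c cu evc sd1 uB1.
  have uB2 : u \notin B2.
    apply/negP => uB2; have : u \in [set u; c] by rewrite !inE eqxx.
    by rewrite -sd1 !inE uB1 uB2.
  have cA : #|v |: (B1 :\ u)| == k.
    have c1 := cardsD1 u B1; rewrite uB1 in c1.
    have hv : v \notin B1 :\ u by rewrite inE negb_and vB1 orbT.
    by rewrite cardsU1 hv -(eqP cB1) c1.
  have AG : v |: (B1 :\ u) \subset gV G.
    by rewrite subUset sub1set vV (subset_trans (subD1set _ _) B1G).
  have AM : v |: (B1 :\ u) \in M.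
    by rewrite /M !inE AG cA !eqxx /= (negbTE uv).
  have pA : p (v |: (B1 :\ u)) = B1.
    rewrite /p; apply/setP => x; rewrite !inE.
    case: (eqVneq x u) => [->|xu]; first by rewrite uB1.
    by case: (eqVneq x v) => [->|xv]; rewrite ?(negbTE vB1).
  split; first by rewrite /Rel AM pA eqxx orbT.
  rewrite /= AG cA B2G cB2 /=; apply/existsP; exists v; apply/existsP; exists c.
  rewrite evc andbT; apply/eqP/setP => x.
  have sx := sd1; move/setP: sx => /(_ x) sx; rewrite !inE in sx; rewrite !inE.
  case: (eqVneq x v) => [->|xv]; first by rewrite (negbTE vB2).
  case: (eqVneq x u) => [->|xu]; first by rewrite (negbTE uB2) /= (eq_sym u c) (negbTE cu).
  rewrite (negbTE xu) /= in sx; rewrite /= -sx.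
  by case: (x \in B1); case: (x \in B2).
apply: subgraph_minor => //; last exact: token_sym.
- by apply/subsetP => B /inH [].
- move=> B B' hB hB' eBB'.
  case: (inH _ hB) => BG vB cB BG2; case: (inH _ hB') => B'G vB' cB' B'G2.
  move: eBB' => /= /and5P [_ _ _ _ /existsP [a /existsP [b /andP [/eqP sd eab]]]].
  have BB' : B != B'.
    apply/eqP => h; move: sd; rewrite h setDv setU0 => h'.
    have : a \in [set a; b] by rewrite !inE eqxx.
    by rewrite -h' inE.
  have key : forall c, (B :\: B') :|: (B' :\: B) = [set u; c] -> c != u ->
      gE G v c -> gE G2 B B'.
    move=> c sdc cu evc.
    case uB: (u \in B).
    + case: (K B B' BG vB cB B'G vB' cB' c cu evc sdc uB) => R1 e1.
      exact: (E2 B B' _ B' BG2 B'G2 BB' R1 (Rr B') e1).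
    + have uB' : u \in B'.
        have : u \in [set u; c] by rewrite !inE eqxx.
        by rewrite -sdc !inE uB andbF /=.
      have sdc' : (B' :\: B) :|: (B :\: B') = [set u; c] by rewrite setUC.
      case: (K B' B B'G vB' cB' BG vB cB c cu evc sdc' uB') => R1 e1.
      apply: (E2 B B' B _ BG2 B'G2 BB' (Rr B) R1); by rewrite symF.
  move: eab => /= /and4P [ab aV bV /or3P [eab|/andP [/eqP au evb]|/andP [/eqP bu eav]]].
  + apply: (E2 B B' B B') => //.
    rewrite /= BG cB B'G cB' /=; apply/existsP; exists a; apply/existsP; exists b.
    by rewrite sd eqxx eab.
  + subst a; apply: (key b) => //; by rewrite eq_sym.
  + subst b; apply: (key a); [by rewrite sd setUC | by [] | by rewrite sym].
Qed.

Lemma step_token (T : finType) (G G1 : sgraph T) k :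
  simple_graph G -> minor_step G G1 -> is_minor (token_graph G1 k) (token_graph G k).
Proof.
move=> sG st; have sG1 := simple_step sG st.

case: st sG1 => [v vV|u v e|u v e] sG1.
- apply: subgraph_minor; last by case: sG1 => s _ _; exact: token_sym.
  + apply/subsetP => A; rewrite /= !inE => /andP [AV cA].
    by rewrite cA (subset_trans AV (subD1set _ _)).
  + move=> A B _ _ /= /and5P [h1 h2 h3 h4 /existsP [a /existsP [b /andP [sd /and3P [eab _ _]]]]].
    rewrite h2 h4 (subset_trans h1 (subD1set _ _)) (subset_trans h3 (subD1set _ _)) /=.
    by apply/existsP; exists a; apply/existsP; exists b; rewrite sd eab.
- apply: subgraph_minor; last by case: sG1 => s _ _; exact: token_sym.
  + by [].
  + move=> A B _ _ /= /and5P [h1 h2 h3 h4 /existsP [a /existsP [b /andP [sd /andP [eab _]]]]].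
    rewrite h1 h2 h3 h4 /=.
    by apply/existsP; exists a; apply/existsP; exists b; rewrite sd eab.
- exact: (token_contract k sG e).
Qed.

Lemma rt_token (T : finType) (G G1 : sgraph T) k :
  clos_refl_trans _ (@minor_step T) G G1 -> simple_graph G ->
  is_minor (token_graph G1 k) (token_graph G k).
Proof.
elim=> {G G1} [x y s|x|x y z r1 IH1 _ IH2] sx.
- exact: step_token.
- by exists (token_graph x k); split; [exact: rt_refl | exact: iso_refl].
- apply: (minor_trans (token_simple k (simple_rt sx r1))) (IH1 sx).
  exact: IH2 (simple_rt sx r1).
Qed.

Theorem lemma5 (T T' : finType) (G : sgraph T) (G' : sgraph T') (k : nat) :
  simple_graph G -> simple_graph G' -> is_minor G' G ->
  1 <= k -> k < #|gV G'| ->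
  is_minor (token_graph G' k) (token_graph G k).
Proof.
move=> sG _ [G0 [r i]] _ _.
case: (rt_token k r sG) => X [rX iX].
exists X; split => //; exact: iso_trans (token_iso k i) iX.
Qed.
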